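(* Consider the networked SVIRS system below on a connected weighted undirected graph, with parameters $N>0$, $0<r<1$, $\mu>0$, $0\le p\le 1$, $\beta>0$, $\xi\ge 0$, $\eta\ge 0$, $0\le\sigma\le 1$, $\gamma\ge 0$, $0<\epsilon\le 1$. If $\mathcal{R}_0>1$, then the system has a unique spatially constant equilibrium $\mathbf{E}=(S_*,V_*,I_*,R_* )$ with $I_*>0$ (the endemic equilibrium).
   Context: Let $G=\langle \mathcal V,\mathcal E,\mathcal W\rangle$ be a connected weighted undirected graph without self-loops, $|\mathcal V|=n$, with weights $w(x,y)=w(y,x)>0$ for adjacent nodes $x\sim y$. For $F:\mathcal V\to\mathbb R$ define $\Delta F(x)=\sum_{y\in\mathcal V,\,y\sim x} w(x,y)\,[F(y)-F(x)]$. The SVIRS model is, for $(x,t)\in\mathcal V\times[0,\infty)$, $\frac{dS}{dt}-\epsilon\Delta S=\mu(1-r)N-(\mu+p)S-\beta SI+\xi V+\eta R$, $\frac{dV}{dt}-\epsilon\Delta V=\mu rN+pS-\beta\sigma VI-(\mu+\xi)V$, $\frac{dI}{dt}-\epsilon\Delta I=\beta SI+\beta\sigma VI-(\mu+\gamma)I$, $\frac{dR}{dt}-\epsilon\Delta R=\gamma I-(\mu+\eta)R$, with $S,V,I,R:\mathcal V\times[0,\infty)\to\mathbb R$. A spatially constant equilibrium is a constant (in $x$ and $t$) solution; for such, $\Delta$ of each component vanishes. The basic reproduction number is $\mathcal R_0=\dfrac{\beta\big((\xi+(1-r)\mu)+\sigma(p+\mu r)\big)N}{(\gamma+\mu)(\mu+p+\xi)}$.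 *)

(* Defs.v *)
From HB Require Import structures.
From mathcomp Require Import all_boot all_order all_algebra.
From mathcomp Require Import all_classical all_reals all_analysis.
Set Implicit Arguments. Unset Strict Implicit. Unset Printing Implicit Defensive.
Import Order.TTheory GRing.Theory Num.Theory.
Local Open Scope ring_scope.

Definition weighted_graph (R : realType) (T : finType) (adj : rel T) (w : T -> T -> R) :=
  [/\ irreflexive adj, symmetric adj,
      (forall x y, w x y = w y x) & (forall x y, adj x y -> 0 < w x y)].

Definition graph_connected (T : finType) (adj : rel T) :=
  (0 < #|T|)%N /\ forall x y, connect adj x y.

Definition graph_laplacian (R : realType) (T : finType) (adj : rel T) (w : T -> T -> R)
  (F : T -> R) (x : T) : R :=
  \sum_(y | adj x y) w x y * (F y - F x).

Definition SVIRS_solution (R : realType) (T : finType) (adj : rel T) (w : T -> T -> R)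
  (N r mu p beta xi eta sigma gamma eps : R) (S V I Rc : T -> R -> R) : Prop :=
  forall (x : T) (t : R), 0 <= t ->
  [/\ derivable (S x) t 1, derivable (V x) t 1, derivable (I x) t 1 & derivable (Rc x) t 1] /\
  [/\     derive1 (S x) t - eps * graph_laplacian adj w (fun y => S y t) x
      = mu * (1 - r) * N - (mu + p) * S x t - beta * S x t * I x t + xi * V x t + eta * Rc x t,
    derive1 (V x) t - eps * graph_laplacian adj w (fun y => V y t) x
      = mu * r * N + p * S x t - beta * sigma * V x t * I x t - (mu + xi) * V x t,
    derive1 (I x) t - eps * graph_laplacian adj w (fun y => I y t) x
      = beta * S x t * I x t + beta * sigma * V x t * I x t - (mu + gamma) * I x t
    & derive1 (Rc x) t - eps * graph_laplacian adj w (fun y => Rc y t) x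
      = gamma * I x t - (mu + eta) * Rc x t].

Definition const_equilibrium (R : realType) (T : finType) (adj : rel T) (w : T -> T -> R)
  (N r mu p beta xi eta sigma gamma eps : R) (s v i rr : R) : Prop :=
  SVIRS_solution adj w N r mu p beta xi eta sigma gamma eps
    (fun _ _ => s) (fun _ _ => v) (fun _ _ => i) (fun _ _ => rr).

Definition R0 (R : realType) (N r mu p beta xi sigma gamma : R) : R :=
  beta * ((xi + (1 - r) * mu) + sigma * (p + mu * r)) * N
  / ((gamma + mu) * (mu + p + xi)).

(* Main.v *)
Require Import Defs.
From HB Require Import structures.
From mathcomp Require Import all_boot all_order all_algebra.
From mathcomp Require Import all_classical all_reals all_analysis.
From mathcomp Require Import ring lra.
Import Order.TTheory GRing.Theory Num.Theory.
Local Open Scope ring_scope.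

Lemma quad_uniq {R : realFieldType} (A B C x y : R) :
  0 <= A -> C < 0 -> 0 < x -> 0 < y ->
  A * x ^+ 2 + B * x + C = 0 -> A * y ^+ 2 + B * y + C = 0 -> x = y.
Proof.
move=> hA hC hx hy qx qy.
have E : (x - y) * (A * x * y - C) = y * (A * x ^+ 2 + B * x + C) - x * (A * y ^+ 2 + B * y + C) by ring.
rewrite qx qy !mulr0 subr0 in E.
have P : 0 < A * x * y - C by have := mulr_ge0 (mulr_ge0 hA (ltW hx)) (ltW hy); lra.
move/eqP: E; rewrite mulf_eq0 (gt_eqF P) orbF subr_eq0 => /eqP //.
Qed.

Lemma quad_exists {R : rcfType} (A B C : R) :
  0 <= A -> C < 0 -> (0 < A \/ 0 < B) ->
  exists x, 0 < x /\ A * x ^+ 2 + B * x + C = 0.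
Proof.
move=> hA hC hAB.
have hd : 0 <= B ^+ 2 - 4 * A * C by have := sqr_ge0 B; nra.
set d := Num.sqrt (B ^+ 2 - 4 * A * C).
have d2 : d ^+ 2 = B ^+ 2 - 4 * A * C by rewrite sqr_sqrtr.
have d0 : 0 <= d by exact: sqrtr_ge0.
have Bd : 0 < B + d.
  case: hAB => h.
  - have : B ^+ 2 < d ^+ 2 by rewrite d2; nra.
    nra.
  - lra.
exists (- (2 * C) / (B + d)); split.
  by apply: divr_gt0 => //; lra.
have nz : B + d != 0 by rewrite gt_eqF.
have E : (A * (- (2 * C) / (B + d)) ^+ 2 + B * (- (2 * C) / (B + d)) + C) * (B + d) ^+ 2
   = C * (4 * A * C - B ^+ 2 + d ^+ 2).
  by field.
move: E; rewrite d2.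
have -> : C * (4 * A * C - B ^+ 2 + (B ^+ 2 - 4 * A * C)) = 0 by ring.
move/eqP; rewrite mulf_eq0 expf_eq0 (negPf nz) andbF orbF => /eqP //.
Qed.
Lemma const_eqP (R : realType) (T : finType) (adj : rel T) (w : T -> T -> R)
  (N r mu p beta xi eta sigma gamma eps : R) (s v i rr : R) (x0 : T) :
  const_equilibrium adj w N r mu p beta xi eta sigma gamma eps s v i rr <->
  [/\ 0 = mu * (1 - r) * N - (mu + p) * s - beta * s * i + xi * v + eta * rr,
      0 = mu * r * N + p * s - beta * sigma * v * i - (mu + xi) * v,
      0 = beta * s * i + beta * sigma * v * i - (mu + gamma) * i
    & 0 = gamma * i - (mu + eta) * rr].
Proof.
have L : forall c : R, forall x, graph_laplacian adj w (fun _ => c) x = 0.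
  by move=> c x; rewrite /graph_laplacian big1 // => y _; rewrite subrr mulr0.
have D : forall c t : R, derive1 (fun _ : R => c) t = 0.
  by move=> c t; exact: (derive1_cst c t).
split.
- move=> /(_ x0 0 (lexx 0)) [_ [e1 e2 e3 e4]].
  by move: e1 e2 e3 e4; rewrite !D !L !mulr0 !subr0.
- move=> [e1 e2 e3 e4] x t _; split.
    by split; exact: derivable_cst.
  by rewrite !D !L !mulr0 !subr0.
Qed.

Theorem mainTheorem1 (R : realType) (T : finType) (adj : rel T) (w : T -> T -> R)
  (N r mu p beta xi eta sigma gamma eps : R) :
  weighted_graph adj w -> graph_connected adj ->
  0 < N -> 0 < r < 1 -> 0 < mu -> 0 <= p <= 1 -> 0 < beta -> 0 <= xi -> 0 <= eta ->
  0 <= sigma <= 1 -> 0 <= gamma -> 0 < eps <= 1 ->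
  1 < R0 N r mu p beta xi sigma gamma ->
  exists s v i rr : R,
    [/\ const_equilibrium adj w N r mu p beta xi eta sigma gamma eps s v i rr, 0 < i &
      forall s' v' i' rr' : R,
        const_equilibrium adj w N r mu p beta xi eta sigma gamma eps s' v' i' rr' ->
        0 < i' -> (s', v', i', rr') = (s, v, i, rr)].
Proof.
move=> _ [cardT _] hN /andP[hr0 hr1] hmu /andP[hp0 hp1] hb hxi heta /andP[hs0 hs1] hg _ hR0.
have [x0 _] := cid (card_gt0P cardT : exists x, x \in T).
set a := mu + gamma.
set c := mu + xi + p * sigma.
set M := mu * r * N + p * a / beta.
set G := N - a / beta.
set k := 1 + gamma / (mu + eta).
set A := k * beta * sigma.
set B := k * c - G * beta * sigma.
set C := (1 - sigma) * M - G * c.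
pose q x := A * x ^+ 2 + B * x + C.
pose D x := beta * sigma * x + c.
pose vf x := M / D x.
pose sf x := (a - beta * sigma * vf x) / beta.
pose rf x := gamma * x / (mu + eta).
have hme : 0 < mu + eta by lra.
have hc : 0 < c by have := mulr_ge0 hp0 hs0; rewrite /c; lra.
have hk : 0 < k by rewrite /k; have := divr_ge0 hg (ltW hme); lra.
have hDx : forall x, 0 <= x -> 0 < D x.
  move=> x hx; rewrite /D; have := mulr_ge0 (mulr_ge0 (ltW hb) hs0) hx; lra.
have hbnz : beta != 0 by rewrite gt_eqF.
have hmenz : mu + eta != 0 by rewrite gt_eqF.
have ident : forall x, 0 <= x -> sf x + vf x + x + rf x - N = q x / D x.
  move=> x hx; have := hDx x hx; rewrite lt0r => /andP[hDnz _].
  rewrite /sf /vf /rf /q /A /B /C /G /k /M; move: hDnz; rewrite /D => hDnz.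
  field; by rewrite hbnz hmenz hDnz.
have hA : 0 <= A by rewrite /A; apply: mulr_ge0 => //; apply: mulr_ge0; lra.
have hC : C < 0.
  have hY : 0 < (gamma + mu) * (mu + p + xi) by apply: mulr_gt0; lra.
  have hR : 1 * ((gamma + mu) * (mu + p + xi)) <
       beta * ((xi + (1 - r) * mu) + sigma * (p + mu * r)) * N.
    by rewrite -ltr_pdivlMr //.
  have -> : C = - (beta * ((xi + (1 - r) * mu) + sigma * (p + mu * r)) * N
                   - (gamma + mu) * (mu + p + xi)) / beta.
    by rewrite /C /M /G /a /c; field.
  rewrite mulNr oppr_lt0; apply: divr_gt0 => //; lra.
have hAB : 0 < A \/ 0 < B.
  have [s0|sp] := eqVneq sigma 0.
    right; rewrite /B s0 mulr0 subr0; exact: mulr_gt0.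
  left; rewrite /A; apply: mulr_gt0; first exact: mulr_gt0.
  by rewrite lt0r sp.
have [i [hi qi]] := @quad_exists R A B C hA hC hAB.
have key : forall s' v' i' rr',
   const_equilibrium adj w N r mu p beta xi eta sigma gamma eps s' v' i' rr' -> 0 < i' ->
   [/\ s' = sf i', v' = vf i', rr' = rf i' & q i' = 0].
  move=> s' v' i' rr' /(const_eqP _ _ _ _ _ _ _ _ _ _ _ _ _ _ _ _ _ _ x0) [e1 e2 e3 e4] hi'.
  have hDi := hDx i' (ltW hi'); have hDnz : D i' != 0 by rewrite gt_eqF.
  have E3 : beta * s' + beta * sigma * v' = a.
    have : i' * (beta * s' + beta * sigma * v' - a) = 0 by rewrite /a; lra.
    move/eqP; rewrite mulf_eq0 (gt_eqF hi') /= subr_eq0 => /eqP //.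
  have Es : s' = (a - beta * sigma * v') / beta.
    by rewrite -E3; field.
  have Ev : v' = vf i'.
    rewrite /vf; apply: (mulIf hDnz); rewrite mulfVK //.
    have : v' * D i' = M.
      rewrite /D /M /c; move: e2; rewrite Es => e2.
      have e2' : 0 = (mu * r * N + p * a / beta - v' * (beta * sigma * i' + (mu + xi + p * sigma))).
        by rewrite e2; field.
      lra.
    by [].
  have Er : rr' = rf i'.
    by rewrite /rf; apply: (mulIf hmenz); rewrite mulfVK //; lra.
  have Esum : s' + v' + i' + rr' - N = 0.
    have : mu * (s' + v' + i' + rr' - N) = 0 by lra.
    by move/eqP; rewrite mulf_eq0 (gt_eqF hmu) /= => /eqP.
  have Es' : s' = sf i' by rewrite Es Ev.
  split => //.
  move: Esum; rewrite Es' Ev Er ident ?(ltW hi') //.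
  by move/eqP; rewrite mulf_eq0 invr_eq0 (negPf hDnz) orbF => /eqP.
exists (sf i), (vf i), i, (rf i); split => //.
  have hDi := hDx i (ltW hi); have hDnz : D i != 0 by rewrite gt_eqF.
  have Esum : sf i + vf i + i + rf i - N = 0 by rewrite ident ?(ltW hi) // /q qi mul0r.
  have E2 : 0 = mu * r * N + p * sf i - beta * sigma * vf i * i - (mu + xi) * vf i.
    rewrite /sf /vf; move: hDnz; rewrite /D /M /c => hDnz; field; by rewrite hbnz hDnz.
  have E3 : 0 = beta * sf i * i + beta * sigma * vf i * i - (mu + gamma) * i.
    by rewrite /sf /a; field.
  have E4 : 0 = gamma * i - (mu + eta) * rf i.
    by rewrite /rf; field.
  apply/(const_eqP _ _ _ _ _ _ _ _ _ _ _ _ _ _ _ _ _ _ x0); split => //.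
  have M1 : mu * (sf i + vf i + i + rf i - N) = 0 by rewrite Esum mulr0.
  move: M1 E2 E3 E4; generalize (sf i) (vf i) (rf i) => S0 V0 Rr M1 E2 E3 E4.
  lra.
move=> s' v' i' rr' he hi'.
have [-> -> -> qi'] := key _ _ _ _ he hi'.
by rewrite (@quad_uniq R A B C i' i hA hC hi' hi qi' qi).
Qed.
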